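(* Let $N\ge1$, $f:\mathbb{N}^N\to\mathbb{N}$, $p$ a prime, $n$ a nonnegative integer and $\mathbf{m}\in\mathbb{N}^N$. Define $g:\mathbb{N}^N\to\mathbb{N}$ by $g(\mathbf{x})=\binom{p}{p\mathbf{x}}_f$. Then $\binom{np}{p\mathbf{m}}_f\equiv\binom{n}{\mathbf{m}}_g\pmod{p^2}$.
   Context: $\mathbb{N}=\{0,1,2,\dots\}$. For a function $h:\mathbb{N}^N\to\mathbb{N}$, $k\ge0$ and $\mathbf{x}\in\mathbb{N}^N$, $\binom{k}{\mathbf{x}}_h=\sum_{\mathbf{m}_1+\cdots+\mathbf{m}_k=\mathbf{x}} h(\mathbf{m}_1)\cdots h(\mathbf{m}_k)$ over tuples of vectors in $\mathbb{N}^N$. *)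

(* Defs.v *)
From mathcomp Require Import all_boot.
Set Implicit Arguments. Unset Strict Implicit. Unset Printing Implicit Defensive.

Definition vec (N : nat) := {ffun 'I_N -> nat}.

Definition vscale (N : nat) (c : nat) (x : vec N) : vec N := [ffun j => c * x j].

(* Generalized multinomial coefficient
     binom k x _h = sum over (m_1,...,m_k) in (N^N)^k with m_1+...+m_k = x
                    of h(m_1)...h(m_k).
   Every summand tuple has all entries bounded by B := max_j x_j, so the sum
   ranges over k-tuples of vectors with entries in 'I_(B+1); this is the same
   (finite) index set, with no summand lost. *)
Definition gbinom (N : nat) (h : vec N -> nat) (k : nat) (x : vec N) : nat :=
  \sum_(ms : {ffun 'I_k -> {ffun 'I_N -> 'I_(\max_(j < N) x j).+1}}
        | [forall j : 'I_N, \sum_(i < k) (ms i j : nat) == x j])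
    \prod_(i < k) h [ffun j => (ms i j : nat)].

(* Main.v *)
Require Import Defs.
From mathcomp Require Import all_boot all_fingroup all_solvable.
From mathcomp Require Import zify.
Set Implicit Arguments. Unset Strict Implicit. Unset Printing Implicit Defensive.

Section Conv.
Variable N : nat.
Notation V := (vec N).

Definition vv K (w : {ffun 'I_N -> 'I_K}) : V := [ffun j => (w j : nat)].

Definition SB K (h : V -> nat) k (x : V) : nat :=
  \sum_(ms : {ffun 'I_k -> {ffun 'I_N -> 'I_K}} | [forall j : 'I_N, \sum_(i < k) (ms i j : nat) == x j])
    \prod_(i < k) h [ffun j => (ms i j : nat)].

Lemma gbinomE h k x : gbinom h k x = SB (\max_(j < N) x j).+1 h k x.
Proof. by []. Qed.

Lemma term_le_sum k (F : 'I_k -> nat) i : F i <= \sum_(i0 < k) F i0.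
Proof. by rewrite (bigD1 i) //= leq_addr. Qed.

Lemma SB_box K K' h k (x : V) : K <= K' -> (forall j, x j < K.+1) ->
  SB K'.+1 h k x = SB K.+1 h k x.
Proof.
move=> KK' xK.
have le : K.+1 <= K'.+1 by [].
rewrite /SB (reindex_onto (fun ms : {ffun 'I_k -> {ffun 'I_N -> 'I_K.+1}} =>
     [ffun i => [ffun j => widen_ord le (ms i j)]])
  (fun ms : {ffun 'I_k -> {ffun 'I_N -> 'I_K'.+1}} =>
     [ffun i => [ffun j => inord (ms i j : nat) : 'I_K.+1]])).
  apply: eq_big => [ms|ms _].
    set c := (X in _ && X).
    have -> : c.
      rewrite /c; apply/eqP/ffunP => i; apply/ffunP => j; rewrite !ffunE; apply/val_inj => /=.
      by rewrite inordK.
    rewrite andbT; apply: eq_forallb => j; congr (_ == _); apply: eq_bigr => i _.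
    by rewrite !ffunE.
  apply: eq_bigr => i _; congr h; apply/ffunP => j; by rewrite !ffunE.
move=> ms /forallP H; apply/ffunP => i; apply/ffunP => j; rewrite !ffunE; apply/val_inj => /=.
rewrite inordK //; apply: leq_ltn_trans (xK j).
move/eqP: (H j) => <-; exact: (term_le_sum (fun i0 => (ms i0 j : nat))).
Qed.


Lemma SB0 K h (x : V) : SB K h 0 x = [forall j, x j == 0].
Proof.
rewrite /SB big_mkcond /=.
rewrite (eq_bigr (fun _ => nat_of_bool [forall j, x j == 0])); last first.
  move=> ms _; rewrite big_ord0.
  have -> : [forall j, \sum_(i < 0) (ms i j : nat) == x j] = [forall j, x j == 0].
    by apply: eq_forallb => j; rewrite big_ord0 eq_sym.
  by case: [forall j, x j == 0].
by rewrite sum_nat_const card_ffun card_ord expn0 mul1n.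
Qed.

Lemma SB1 K h (x : V) : (forall j, x j < K.+1) -> SB K.+1 h 1 x = h x.
Proof.
move=> xK.
pose ms0 : {ffun 'I_1 -> {ffun 'I_N -> 'I_K.+1}} := [ffun _ => [ffun j => inord (x j)]].
rewrite /SB (big_pred1 ms0).
  rewrite big_ord1; congr h; apply/ffunP => j; by rewrite !ffunE inordK.
move=> ms /=; apply/forallP/eqP => [H|->].
  apply/ffunP => i; apply/ffunP => j; rewrite !ffunE; apply/val_inj => /=.
  rewrite inordK // (ord1 i); move/eqP: (H j) => <-; by rewrite big_ord1.
by move=> j; rewrite big_ord1 !ffunE inordK.
Qed.


Section Add.
Variable K : nat.
Notation W := {ffun 'I_N -> 'I_K.+1}.
Definition tsum k (ms : {ffun 'I_k -> W}) : V := [ffun j => \sum_(i < k) (ms i j : nat)].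
Definition wt h k (ms : {ffun 'I_k -> W}) := \prod_(i < k) h [ffun j => (ms i j : nat)].
Definition vadd (u v : V) : V := [ffun j => u j + v j].

Lemma SBE h k x : SB K.+1 h k x = \sum_(ms : {ffun 'I_k -> W} | tsum ms == x) wt h ms.
Proof.
apply: eq_bigl => ms; apply/forallP/eqP => [H|<-].
  apply/ffunP => j; rewrite ffunE; exact/eqP.
by move=> j; rewrite ffunE.
Qed.

Lemma inner_y (u v x : V) c : (forall j, x j < K.+1) ->
  \sum_(y : W) (if [forall j, (y j:nat) <= x j] && (u == vv y) && (v == [ffun j => x j - y j])
                then c else 0) = if vadd u v == x then c else 0.
Proof.
move=> xK; case: eqP => [Hx|Hx].
- have uK j : u j < K.+1.
    apply: leq_ltn_trans (xK j); rewrite -Hx ffunE; exact: leq_addr.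
  pose y0 : W := [ffun j => inord (u j)].
  have vy0 : vv y0 = u by apply/ffunP => j; rewrite !ffunE inordK.
  rewrite (bigD1 y0) //= ifT; last first.
    rewrite vy0 eqxx andbT; apply/andP; split.
      apply/forallP => j; rewrite ffunE inordK // -Hx ffunE; exact: leq_addr.
    apply/eqP/ffunP => j; rewrite -Hx !ffunE inordK //; apply/eqP; rewrite addKn //=.
  rewrite big1 ?addn0 //.
  move=> y Hy; rewrite ifF //; apply/negbTE; apply/negP => /andP [/andP [_ /eqP Hu] _].
  move/eqP: Hy; apply; apply/ffunP => j; apply/val_inj; rewrite ffunE /= inordK // Hu ffunE //.
- rewrite big1 // => y _; rewrite ifF //; apply/negbTE/negP.
  move=> /andP [/andP [/forallP Hle /eqP Hu] /eqP Hv]; apply: Hx; apply/ffunP => j.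
  rewrite !ffunE Hu Hv !ffunE subnKC //; have := Hle j; by [].
Qed.

Lemma SB_add h a b (x : V) : (forall j, x j < K.+1) ->
  SB K.+1 h (a + b) x = \sum_(y : W | [forall j, (y j : nat) <= x j])
     SB K.+1 h a (vv y) * SB K.+1 h b [ffun j => x j - y j].
Proof.
move=> xK.
transitivity (\sum_(l : {ffun 'I_a -> W}) \sum_(r : {ffun 'I_b -> W})
   (if vadd (tsum l) (tsum r) == x then wt h l * wt h r else 0)).
- rewrite SBE pair_big /=.
  rewrite (reindex (fun ms : {ffun 'I_(a+b) -> W} =>
      ([ffun i => ms (lshift b i)], [ffun i => ms (rshift a i)]))) /=.
  + rewrite big_mkcond; apply: eq_bigr => ms _.
    have -> : tsum ms = vadd (tsum [ffun i => ms (lshift b i)]) (tsum [ffun i => ms (rshift a i)]).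
      apply/ffunP => j; rewrite !ffunE big_split_ord; congr (_ + _); apply: eq_bigr => i _; by rewrite !ffunE.
    have -> : wt h ms = wt h [ffun i => ms (lshift b i)] * wt h [ffun i => ms (rshift a i)].
      rewrite /wt big_split_ord; congr (_ * _); apply: eq_bigr => i _; congr h; apply/ffunP => j; by rewrite !ffunE.
    by [].
  + exists (fun lr : {ffun 'I_a -> W} * {ffun 'I_b -> W} =>
       [ffun i => match split i with inl i' => lr.1 i' | inr i' => lr.2 i' end]).
    * move=> ms _; apply/ffunP => i; rewrite ffunE /=.
      case: splitP => [i' Hi|i' Hi]; rewrite ffunE; congr (ms _); apply/val_inj => /=; by rewrite Hi.
    * move=> [l r] _; congr pair; apply/ffunP => i; rewrite !ffunE.
        by have := unsplitK (inl _ i : 'I_a + 'I_b) => /= ->.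
      by have := unsplitK (inr _ i : 'I_a + 'I_b) => /= ->.
- transitivity (\sum_(l : {ffun 'I_a -> W}) \sum_(r : {ffun 'I_b -> W}) \sum_(y : W)
     (if [forall j, (y j:nat) <= x j] && (tsum l == vv y) && (tsum r == [ffun j => x j - y j])
      then wt h l * wt h r else 0)).
    apply: eq_bigr => l _; apply: eq_bigr => r _; by rewrite inner_y.
  under eq_bigr do rewrite exchange_big.
  rewrite exchange_big [RHS]big_mkcond; apply: eq_bigr => y _ /=.
  case: ifP => Hy /=; last first.
    by rewrite big1 // => l _; rewrite big1.
  rewrite !SBE big_distrl [RHS]big_mkcond; apply: eq_bigr => l _ /=.
  case: (tsum l == vv y) => /=; last by rewrite big1.
  rewrite big_distrr [RHS]big_mkcond; apply: eq_bigr => r _ /=.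
  by case: (tsum r == _).
Qed.
End Add.


Lemma sum_lt_min c M : \sum_(k < M) (k < c : nat) = minn c M.
Proof.
elim: M => [|M IH]; first by rewrite big_ord0 minn0.
rewrite big_ord_recr /= IH; case: (ltnP M c) => H /=; lia.
Qed.

Lemma iter_ordS_val p k (i : 'I_p) : (iter k (@ordS p) i : nat) = (i + k) %% p.
Proof.
elim: k => [|k IH]; first by rewrite addn0 modn_small.
by rewrite iterS /= IH -addn1 modnDml -addnA addn1 addnS.
Qed.

Section Rot.
Variable K : nat.
Notation W := {ffun 'I_N -> 'I_K.+1}.
Variable p : nat.
Notation T := {ffun 'I_p -> W}.

Definition rot (t : T) : T := [ffun i => t (ordS i)].
Lemma rot_inj : injective rot.
Proof.
move=> t1 t2 /ffunP H; apply/ffunP => i; have := H (ord_pred i); by rewrite !ffunE ord_predK.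
Qed.
Definition rho : {perm T} := perm rot_inj.

Lemma rhoX k t : (rho ^+ k)%g t = [ffun i => t (iter k (@ordS p) i)].
Proof.
elim: k t => [|k IH] t.
  by rewrite expg0 perm1; apply/ffunP => i; rewrite ffunE.
rewrite expgSr permM IH permE /rot; apply/ffunP => i; rewrite !ffunE; by rewrite iterSr.
Qed.

Lemma rhoXp : (rho ^+ p = 1)%g.
Proof.
apply/permP => t; rewrite rhoX perm1; apply/ffunP => i; rewrite ffunE; congr (t _).
by apply/val_inj; rewrite /= iter_ordS_val modnDr modn_small.
Qed.

Lemma rho_pgroup : prime p -> (p.-group <[rho]>)%g.
Proof.
move=> pp; rewrite pgroupE; apply: (@pnat_dvd _ p); last exact: pnat_id.
by rewrite order_dvdn rhoXp.
Qed.

Lemma ordS_inj : injective (@ordS p).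
Proof. exact: can_inj (@ordSK p). Qed.

Lemma tsum_rot t : tsum (rot t) = tsum t.
Proof.
apply/ffunP => j; rewrite !ffunE.
rewrite [RHS](reindex_inj ordS_inj) /=; apply: eq_bigr => i _; by rewrite ffunE.
Qed.

Lemma wt_rot h t : wt h (rot t) = wt h t.
Proof.
rewrite /wt [RHS](reindex_inj ordS_inj) /=; apply: eq_bigr => i _; congr h; apply/ffunP => j; by rewrite !ffunE.
Qed.

Lemma tsum_wt_rhoX h k t : tsum ((rho ^+ k)%g t) = tsum t /\ wt h ((rho ^+ k)%g t) = wt h t.
Proof.
elim: k => [|k [IH1 IH2]]; first by rewrite expg0 perm1.
by rewrite expgSr permM permE tsum_rot wt_rot IH1 IH2.
Qed.

Lemma SB_rot f (x : V) : prime p -> (exists j, ~~ (p %| x j)) -> p %| SB K.+1 f p x.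
Proof.
move=> pp [j0 Hj0].
rewrite SBE.
set S := [set t : T | tsum t == x].
have -> : \sum_(t : T | tsum t == x) wt f t = \sum_(t in S) wt f t.
  by apply: eq_bigl => t; rewrite inE.
set M := \max_(t : T) wt f t.
have -> : \sum_(t in S) wt f t = \sum_(k < M.+1) #|[set t in S | k < wt f t]|.
  transitivity (\sum_(t in S) \sum_(k < M.+1) (k < wt f t : nat)).
    apply: eq_bigr => t _; rewrite sum_lt_min; apply/esym/minn_idPl.
    apply: leq_trans (leq_bigmax t) _; exact: leqnSn.
  rewrite exchange_big; apply: eq_bigr => k _.
  rewrite -(@sum1_card _ (pred_of_set [set t in S | k < wt f t])) big_mkcond [RHS]big_mkcond; apply: eq_bigr => t _ /=.
  by rewrite !inE; case: (tsum t == x); case: (k < wt f t).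
apply: dvdn_sum => k _.
set Sk := [set t in S | k < wt f t].
have acts : ([acts <[rho]>, on Sk | 'P])%g.
  apply/actsP => a /cycleP [i ->] t /=.
  have [H1 H2] := tsum_wt_rhoX f i t.
  by rewrite !inE H1 H2.
have := pgroup_fix_mod (rho_pgroup pp) acts.
have -> : ('Fix_(Sk | 'P)(<[rho]>))%g = set0.
  apply/setP => t; rewrite in_setI in_set0; apply/negbTE/negP => /andP [Ht /afixP Hfix].
  have Hr : rot t = t.
    have H : rho t = t := Hfix rho (cycle_id rho); by rewrite /rho permE in H.
  have p0 : 0 < p := prime_gt0 pp.
  pose i0 : 'I_p := Ordinal p0.
  have Hit n : t (iter n (@ordS p) i0) = t i0.
    elim: n => [|n IH] //; rewrite iterS -IH.
    by move/ffunP: Hr => /(_ (iter n (@ordS p) i0)); rewrite ffunE.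
  have Hc i : t i = t i0.
    rewrite -(Hit i); congr (t _); apply/val_inj; by rewrite /= iter_ordS_val add0n modn_small.
  move: Ht; rewrite !inE => /andP [/eqP Hs _].
  move: Hj0; rewrite -Hs ffunE.
  rewrite (eq_bigr (fun _ => (t i0 j0 : nat))); last by move=> i _; rewrite Hc.
  by rewrite sum_nat_const card_ord dvdn_mulr.
rewrite cards0 mod0n => /eqP; by rewrite -/(dvdn p _).
Qed.
End Rot.


Lemma gbinom_SB K h k (x : V) : (forall j, x j < K.+1) -> gbinom h k x = SB K.+1 h k x.
Proof.
move=> xK; rewrite gbinomE; apply/esym/SB_box.
  by apply/bigmax_leqP => j _; have := xK j.
move=> j; rewrite ltnS.
exact: leq_bigmax.
Qed.

Lemma val_inord n k : (@inord n k : nat) = if k < n.+1 then k else 0.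
Proof. by rewrite /inord val_insubd. Qed.

Lemma sum_congr_mod (I : finType) (P : pred I) (F G : I -> nat) d :
  (forall i, P i -> F i = G i %[mod d]) ->
  \sum_(i | P i) F i = \sum_(i | P i) G i %[mod d].
Proof.
move=> H; rewrite -modn_summ (eq_bigr (fun i => G i %% d)) // modn_summ //.
Qed.

Section Main.
Variables (f : V -> nat) (p K : nat).
Hypothesis pp : prime p.
Notation W := {ffun 'I_N -> 'I_K.+1}.
Let g := fun y : V => gbinom f p (vscale p y).

Lemma mainlem n :
  (forall x : V, (forall j, x j < K.+1) -> (exists j, ~~ (p %| x j)) -> p %| SB K.+1 f (n * p) x)
  /\ (forall x : V, (forall j, p * x j < K.+1) ->
        SB K.+1 f (n * p) (vscale p x) = SB K.+1 g n x %[mod p ^ 2]).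
Proof.
have p0 : 0 < p := prime_gt0 pp.
elim: n => [|n [IHa IHb]].
  rewrite mul0n; split.
    move=> x _ [j0 Hj0]; rewrite SB0.
    case: forallP => [H|//]; by move: Hj0; rewrite (eqP (H j0)) dvdn0.
  move=> x _; rewrite !SB0.
  have -> : [forall j, vscale p x j == 0] = [forall j, x j == 0].
    apply: eq_forallb => j; rewrite ffunE muln_eq0; by case: p p0.
  by [].
rewrite mulSn; split.
  move=> x xK [j0 Hj0]; rewrite SB_add //; apply: dvdn_sum => y /forallP Hy.
  case: (boolP [forall j, p %| (y j : nat)]) => [/forallP Hall|/forallPn [j1 Hj1]].
    apply: dvdn_mull; apply: IHa.
      by move=> j; rewrite ffunE; apply: leq_ltn_trans (leq_subr _ _) (xK j).
    exists j0; rewrite ffunE; apply/negP => Hd; move: Hj0.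
    by rewrite -(subnKC (Hy j0)) dvdn_add.
  apply: dvdn_mulr; apply: SB_rot => //; exists j1; by rewrite ffunE.
move=> x xK.
have pxK : forall j, vscale p x j < K.+1 by move=> j; rewrite ffunE.
have xK' : forall j, x j < K.+1.
  by move=> j; apply: leq_ltn_trans (xK j); apply: leq_pmull.
rewrite SB_add //.
have -> : SB K.+1 g n.+1 x = SB K.+1 g (1 + n) x by [].
rewrite SB_add //.
rewrite (bigID (fun y : W => [forall j, p %| (y j : nat)])) /=.
rewrite -modnDmr.
have -> : (\sum_(i : W | [forall j, i j <= vscale p x j] && ~~ [forall j, p %| (i j : nat)])
            SB K.+1 f p (vv i) * SB K.+1 f (n * p) [ffun j => vscale p x j - i j]) %% p ^ 2 = 0.
  apply/eqP; rewrite -/(dvdn _ _); apply: dvdn_sum => y /andP [/forallP Hy /forallPn [j1 Hj1]].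
  rewrite -mulnn; apply: dvdn_mul.
    apply: SB_rot => //; exists j1; by rewrite ffunE.
  apply: IHa.
    by move=> j; rewrite ffunE; apply: leq_ltn_trans (leq_subr _ _) (pxK j).
  exists j1; rewrite ffunE; apply/negP => Hd; move: Hj1.
  by rewrite -(dvdn_addr _ Hd) subnK ?Hy // ffunE dvdn_mulr.
rewrite addn0.
pose hp (y : W) : W := [ffun j => inord (p * y j)].
pose hq (y : W) : W := [ffun j => inord (y j %/ p)].
rewrite (reindex_onto hp hq); last first.
  move=> y /andP [/forallP Hy /forallP Hd]; apply/ffunP => j; apply/val_inj.
  have yK : y j < K.+1 by [].
  rewrite !ffunE /=.
  rewrite (@inordK K (y j %/ p)); last by apply: leq_ltn_trans (leq_div _ _) yK.
  rewrite inordK; rewrite mulnC divnK //.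
have Hl : forall y : W, [forall j, (y j : nat) <= x j] -> forall j, p * y j < K.+1.
  move=> y /forallP H j; apply: leq_ltn_trans (xK j); exact: leq_mul.
rewrite [X in X %% _ = _](eq_bigl (fun y : W => [forall j, (y j : nat) <= x j])); last first.
  move=> y; apply/idP/idP.
    move/andP => [/andP [/forallP H1 _] /eqP H3]; apply/forallP => j.
    have := H1 j; rewrite !ffunE val_inord; case: ifP => Hlt.
      by rewrite leq_pmul2l.
    move=> _; have : (hq (hp y)) j = y j by rewrite H3.
    move/(congr1 (fun z : 'I_K.+1 => z : nat)); rewrite !ffunE /= !val_inord Hlt div0n /= => <-.
    by [].
  move=> Hy; have Hl' := Hl y Hy; move/forallP: Hy => Hy.
  apply/andP; split; first (apply/andP; split).
  - by apply/forallP => j; rewrite !ffunE inordK // leq_mul.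
  - by apply/forallP => j; rewrite !ffunE inordK // dvdn_mulr.
  - apply/eqP/ffunP => j; apply/val_inj; rewrite !ffunE /= (inordK (Hl' j)) mulKn //.
    rewrite inordK //; apply: leq_ltn_trans (Hl' j); exact: leq_pmull.
apply: sum_congr_mod => y Hy.
have Hl' := Hl y Hy; move/forallP: Hy => Hy.
have E1 : vv (hp y) = vscale p (vv y).
  by apply/ffunP => j; rewrite !ffunE inordK.
have E2 : [ffun j0 => vscale p x j0 - hp y j0] = vscale p [ffun j => x j - y j].
  by apply/ffunP => j; rewrite !ffunE inordK // mulnBr.
rewrite E1 E2 SB1; last by move=> j; rewrite ffunE; apply: leq_ltn_trans (xK' j).
rewrite /g (@gbinom_SB K); last first.
  by move=> j; rewrite !ffunE.
rewrite -modnMmr IHb ?modnMmr //.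
move=> j; rewrite ffunE; apply: leq_ltn_trans (xK j); rewrite leq_pmul2l //; exact: leq_subr.
Qed.
End Main.

End Conv.

Theorem theorem7 (N : nat) (f : vec N -> nat) (p n : nat) (m : vec N) :
  1 <= N -> prime p ->
  gbinom f (n * p) (vscale p m)
    = gbinom (fun x : vec N => gbinom f p (vscale p x)) n m %[mod p ^ 2].
Proof.
move=> _ pp.
set K := \max_(j < N) vscale p m j.
have HK : forall j, p * m j < K.+1.
  move=> j; rewrite ltnS; have := leq_bigmax (F := fun j0 : 'I_N => vscale p m j0) j.
  by rewrite ffunE.
rewrite (gbinomE f (n * p)) -/K.
rewrite (@gbinom_SB N K); last first.
  move=> j; apply: leq_ltn_trans (HK j); apply: leq_pmull; exact: prime_gt0.
have [_ Hb] := @mainlem N f p K pp n.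
exact: Hb.
Qed.
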